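(* Let $X$ be a topological group with identity $e$, equipped with a proper length function $\ell:X\to[0,\infty)$. Let $\mathcal H$ be a Hilbert space, let $U:X\to\mathcal U(\mathcal H)$ be a unitary representation of $X$, and let $\{x_j\}_{j\in J}$ be a net in $X$ with $x_j\to\infty$. Assume there exists a self-adjoint operator $A$ in $\mathcal H$ such that $U(x_j)\in C^1(A)$ for each $j\in J$, and suppose that the strong limit $$D:=\operatorname{s-lim}_j\frac{1}{\ell(x_j)}[A,U(x_j)]U(x_j)^{-1}$$ exists. Then: (a) $\lim_j\langle\varphi,U(x_j)\psi\rangle=0$ for all $\varphi\in\ker(D)^\perp$ and $\psi\in\mathcal H$; (b) $U$ has no nontrivial finite-dimensional unitary subrepresentation in $\ker(D)^\perp$, i.e. there is no nonzero finite-dimensional subspace of $\ker(D)^\perp$ invariant under all $U(x)$, $x\in X$.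
   Context: $\mathcal U(\mathcal H)$ is the group of unitary operators on $\mathcal H$; the scalar product is antilinear in the first argument. A proper length function is a map $\ell:X\to[0,\infty)$ with: (L1) $\ell(e)=0$; (L2) $\ell(x^{-1})=\ell(x)$ for all $x$; (L3) $\ell(xy)\le\ell(x)+\ell(y)$ for all $x,y$; (L4) for every compact $K\subset[0,\infty)$, $\ell^{-1}(K)$ is relatively compact in $X$. A net $\{x_j\}$ in $X$ diverges to infinity ($x_j\to\infty$) if it has no limit (cluster) point in $X$. For a self-adjoint operator $A$ and bounded $S$, $S\in C^1(A)$ means $t\mapsto e^{-itA}Se^{itA}$ is strongly $C^1$; equivalently the form $\mathrm{dom}(A)\ni\varphi\mapsto\langle A\varphi,S\varphi\rangle-\langle\varphi,SA\varphi\rangle$ is continuous for the topology of $\mathcal H$, and $[A,S]$ denotes the bounded operator associated with its continuous extension. *)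

(* Defs.v *)
From mathcomp Require Import all_boot all_order all_algebra.
From mathcomp Require Import all_classical all_reals topology normedtype.
From mathcomp Require Import complex.
Set Implicit Arguments. Unset Strict Implicit. Unset Printing Implicit Defensive.
Import Order.TTheory GRing.Theory Num.Theory.
Import numFieldTopology.Exports numFieldNormedType.Exports.
Local Open Scope ring_scope.
Local Open Scope classical_set_scope.

Section HilbertDefs.
Variables (R : realType) (H : lmodType R[i]) (ip : H -> H -> R[i]).

Definition hnorm (x : H) : R[i] := sqrtC (ip x x).

(* complex Hilbert space; scalar product antilinear in the first argument *)
Definition is_hilbert : Prop :=
  [/\ (forall (a : R[i]) (x y z : H), ip x (a *: y + z) = a * ip x y + ip x z),
      (forall x y : H, ip y x = (ip x y)^*),
      (forall x : H, 0 <= ip x x),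
      (forall x : H, ip x x = 0 -> x = 0) &
      (forall u : nat -> H,
         (forall eps : R[i], 0 < eps -> exists N, forall m n, (N <= m)%N -> (N <= n)%N ->
             hnorm (u m - u n) < eps) ->
         exists l : H, forall eps : R[i], 0 < eps -> exists N, forall n, (N <= n)%N ->
             hnorm (u n - l) < eps)].

Definition is_linear_op (S : H -> H) : Prop :=
  forall (a : R[i]) (u v : H), S (a *: u + v) = a *: S u + S v.

Definition is_bounded_op (S : H -> H) : Prop :=
  is_linear_op S /\ exists M : R[i], forall u, hnorm (S u) <= M * hnorm u.

Definition is_unitary (S : H -> H) : Prop :=
  [/\ is_linear_op S, (forall u v, ip (S u) (S v) = ip u v) &
      (forall v, exists u, S u = v)].

(* self-adjoint (possibly unbounded) operator A with domain domA:
   domA is a dense subspace, A is linear on it, and A = A^star where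
   dom(A^star) = {psi | exists eta, forall phi in domA, <psi, A phi> = <eta, phi>},
   A^star psi = that eta. *)
Definition is_selfadjoint (domA : set H) (A : H -> H) : Prop :=
  [/\ domA 0 /\ (forall (a : R[i]) u v, domA u -> domA v -> domA (a *: u + v)),
      (forall (a : R[i]) u v, domA u -> domA v -> A (a *: u + v) = a *: A u + A v),
      (forall (x : H) (eps : R[i]), 0 < eps -> exists y, domA y /\ hnorm (x - y) < eps),
      (forall psi : H, domA psi <->
          exists eta : H, forall phi, domA phi -> ip psi (A phi) = ip eta phi) &
      (forall psi phi : H, domA psi -> domA phi -> ip psi (A phi) = ip (A psi) phi)].

Definition comm_form (A S : H -> H) (phi psi : H) : R[i] :=
  ip (A phi) (S psi) - ip phi (S (A psi)).

Definition in_C1 (domA : set H) (A S : H -> H) : Prop :=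
  exists c : R[i], forall phi psi, domA phi -> domA psi ->
    `|comm_form A S phi psi| <= c * hnorm phi * hnorm psi.

(* T = [A, S]: the bounded operator associated with the continuous extension of the form *)
Definition is_commutator (domA : set H) (A S T : H -> H) : Prop :=
  is_bounded_op T /\
  forall phi psi, domA phi -> domA psi -> ip phi (T psi) = comm_form A S phi psi.

Definition ker_perp (D : H -> H) : set H :=
  [set phi | forall v, D v = 0 -> ip v phi = 0].

Definition span_of (s : seq H) : set H :=
  [set v | exists c : 'I_(size s) -> R[i], v = \sum_(i < size s) c i *: nth 0 s i].

End HilbertDefs.

Section NetDefs.
Variables (J : Type) (le : J -> J -> Prop).

Definition is_directed : Prop :=
  [/\ (exists j : J, True), (forall j, le j j),
      (forall i j k, le i j -> le j k -> le i k) &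
      (forall i j, exists k, le i k /\ le j k)].

Definition net_cluster {X : topologicalType} (x : J -> X) (p : X) : Prop :=
  forall N, nbhs p N -> forall j, exists k, le j k /\ N (x k).

(* x_j -> infinity *)
Definition net_diverges {X : topologicalType} (x : J -> X) : Prop :=
  ~ exists p, net_cluster x p.

Definition net_cvgC (R : realType) (z : J -> R[i]) (l : R[i]) : Prop :=
  forall eps : R[i], 0 < eps -> exists j0, forall j, le j0 j -> `|z j - l| < eps.

Definition net_slim (R : realType) (H : lmodType R[i]) (ip : H -> H -> R[i])
    (T : J -> H -> H) (D : H -> H) : Prop :=
  forall psi : H, forall eps : R[i], 0 < eps -> exists j0, forall j, le j0 j ->
    hnorm ip (T j psi - D psi) < eps.
End NetDefs.

Section GroupDefs.
Variables (X : topologicalType) (mul : X -> X -> X) (inv : X -> X) (e : X).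

Definition is_topological_group : Prop :=
  [/\ (forall x y z, mul x (mul y z) = mul (mul x y) z),
      (forall x, mul e x = x /\ mul x e = x),
      (forall x, mul (inv x) x = e /\ mul x (inv x) = e),
      continuous (fun p : X * X => mul p.1 p.2) &
      continuous inv].

Definition is_proper_length (R : realType) (l : X -> R) : Prop :=
  [/\ (forall x, 0 <= l x), l e = 0,
      (forall x, l (inv x) = l x),
      (forall x y, l (mul x y) <= l x + l y) &
      (forall K : set R, compact K -> K `<=` [set r | 0 <= r] ->
          compact (closure (l @^-1` K)))].

Definition is_unitary_rep (R : realType) (H : lmodType R[i]) (ip : H -> H -> R[i])
    (U : X -> H -> H) : Prop :=
  [/\ (forall x, is_unitary ip (U x)),
      U e = id,
      (forall x y, U (mul x y) = U x \o U y) &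
      (forall (v : H) (x0 : X) (eps : R[i]), 0 < eps ->
          \forall x \near x0, hnorm ip (U x v - U x0 v) < eps)].
End GroupDefs.

(* Main.v *)
Require Import Defs.
From mathcomp Require Import all_boot all_order all_algebra.
From mathcomp Require Import all_classical all_reals topology normedtype.
From mathcomp Require Import complex.
From mathcomp Require Import ring lra.
Import Order.TTheory GRing.Theory Num.Theory.
Import numFieldTopology.Exports numFieldNormedType.Exports.
Local Open Scope ring_scope.
Local Open Scope classical_set_scope.
Local Notation "x %:C" := (real_complex _ x) : ring_scope.

Section Hil.
Variables (R : realType) (H : lmodType R[i]) (ip : H -> H -> R[i]).
Hypothesis hH : is_hilbert ip.

Lemma ipL a x y z : ip x (a *: y + z) = a * ip x y + ip x z.
Proof. by case: hH. Qed.
Lemma ipC x y : ip y x = (ip x y)^*.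
Proof. by case: hH. Qed.
Lemma ipxx_ge0 x : 0 <= ip x x.
Proof. by case: hH. Qed.
Lemma ipxx_eq0 x : ip x x = 0 -> x = 0.
Proof. by case: hH => _ _ _ /(_ x). Qed.

Lemma ipx0 x : ip x 0 = 0.
Proof.
have := ipL 1 x 0 0; rewrite scaler0 addr0 mul1r => h.
by apply: (addrI (ip x 0)); rewrite addr0 -h.
Qed.
Lemma ipDr x y z : ip x (y + z) = ip x y + ip x z.
Proof. by have := ipL 1 x y z; rewrite scale1r mul1r. Qed.
Lemma ipZr x a y : ip x (a *: y) = a * ip x y.
Proof. by have := ipL a x y 0; rewrite !addr0 ipx0 addr0. Qed.
Lemma ipNr x y : ip x (- y) = - ip x y.
Proof. by rewrite -scaleN1r ipZr mulN1r. Qed.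
Lemma ipBr x y z : ip x (y - z) = ip x y - ip x z.
Proof. by rewrite ipDr ipNr. Qed.
Lemma ip0x x : ip 0 x = 0.
Proof. by rewrite ipC ipx0 conjC0. Qed.
Lemma ipDl x y z : ip (y + z) x = ip y x + ip z x.
Proof. by rewrite [ip y x]ipC [ip z x]ipC [ip (y+z) x]ipC ipDr rmorphD. Qed.
Lemma ipZl x a y : ip (a *: y) x = a^* * ip y x.
Proof. by rewrite [ip y x]ipC [ip (a *: y) x]ipC ipZr rmorphM. Qed.
Lemma ipNl x y : ip (- y) x = - ip y x.
Proof. by rewrite -scaleN1r ipZl rmorphN rmorph1 mulN1r. Qed.
Lemma ipBl x y z : ip (y - z) x = ip y x - ip z x.
Proof. by rewrite ipDl ipNl. Qed.
Lemma ip_sumr x (I : Type) (s : seq I) (F : I -> H) :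
  ip x (\sum_(i <- s) F i) = \sum_(i <- s) ip x (F i).
Proof.
elim: s => [|a s IH]; first by rewrite !big_nil ipx0.
by rewrite !big_cons ipDr IH.
Qed.
Lemma ipxx_conj x : (ip x x)^* = ip x x.
Proof. by rewrite -ipC. Qed.
Lemma ipxx_real x : ip x x \is Num.real.
Proof. by rewrite realE ipxx_ge0. Qed.

Lemma hnorm_ge0 x : 0 <= hnorm ip x.
Proof. by rewrite /hnorm sqrtC_ge0 ipxx_ge0. Qed.
Lemma hnorm_sq x : hnorm ip x ^+ 2 = ip x x.
Proof. by rewrite /hnorm sqrtCK. Qed.

Lemma CS a b : `|ip a b| <= hnorm ip a * hnorm ip b.
Proof.
have [a0|aa0] := eqVneq (ip a a) 0.
  by rewrite (ipxx_eq0 _ a0) ip0x normr0 mulr_ge0 // hnorm_ge0.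
have aap : 0 < ip a a by rewrite lt_def aa0 ipxx_ge0.
set z := ip a b.
have key : `|z| ^+ 2 <= ip a a * ip b b.
  pose t := z / ip a a.
  have := ipxx_ge0 (b - t *: a).
  rewrite ipBl !ipBr !ipZl !ipZr (ipC a b) -/z.
  have -> : t^* = z^* / ip a a by rewrite /t rmorphM fmorphV; congr (_ * _^-1); exact: ipxx_conj.
  rewrite /t normCK => h.
  have h2 := mulr_ge0 (ltW aap) h.
  rewrite -subr_ge0; apply: le_trans h2 _; rewrite le_eqVlt; apply/orP; left; apply/eqP.
  field; exact: aa0.
rewrite -(sqrCK (normr_ge0 z)) /hnorm -sqrtCM ?nnegrE ?ipxx_ge0 //.
by rewrite ler_sqrtC // nnegrE ?exprn_ge0 ?mulr_ge0 ?ipxx_ge0.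
Qed.


Definition nrm x : R := complex.Re (hnorm ip x).
Definition ab (z : R[i]) : R := complex.Re `|z|.

Lemma CM (x y : R) : (x * y)%:C = x%:C * y%:C.
Proof. exact: rmorphM. Qed.
Lemma CD (x y : R) : (x + y)%:C = x%:C + y%:C.
Proof. exact: rmorphD. Qed.
Lemma CB (x y : R) : (x - y)%:C = x%:C - y%:C.
Proof. exact: rmorphB. Qed.
Lemma CN (x : R) : (- x)%:C = - x%:C.
Proof. exact: rmorphN. Qed.
Lemma CX (x : R) n : (x ^+ n)%:C = x%:C ^+ n.
Proof. exact: rmorphXn. Qed.
Lemma CV (x : R) : (x^-1)%:C = (x%:C)^-1.
Proof. exact: fmorphV. Qed.
Lemma Cn n : (n%:R : R)%:C = n%:R.
Proof. exact: rmorph_nat. Qed.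
Lemma C0 : (0 : R)%:C = 0.
Proof. by []. Qed.
Lemma C1 : (1 : R)%:C = 1.
Proof. by []. Qed.
Lemma Cconj (x : R) : (x%:C)^* = x%:C.
Proof. by change (Complex x (- 0) = Complex x 0); rewrite oppr0. Qed.

Lemma Cre (c : R[i]) : 0 <= c -> c = (complex.Re c)%:C.
Proof. by case: c => a b; rewrite lecE /= => /andP[/eqP -> _]. Qed.
Lemma Cre_gt0 (c : R[i]) : 0 < c -> c = (complex.Re c)%:C /\ 0 < complex.Re c.
Proof.
move=> h; split; first exact/Cre/ltW.
by move: h; case: c => a b; rewrite ltcE /= => /andP[_ ->].
Qed.
Lemma hnormE x : hnorm ip x = (nrm x)%:C.
Proof. exact/Cre/hnorm_ge0. Qed.
Lemma abE z : `|z| = (ab z)%:C.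
Proof. exact/Cre/normr_ge0. Qed.
Lemma nrm_ge0 x : 0 <= nrm x.
Proof. by have := hnorm_ge0 x; rewrite lecE => /andP[_]. Qed.
Lemma ab_ge0 z : 0 <= ab z.
Proof. by have := normr_ge0 z; rewrite lecE => /andP[_]. Qed.
Lemma ipxx_nrm x : ip x x = (nrm x ^+ 2)%:C.
Proof. by rewrite -hnorm_sq hnormE rmorphXn. Qed.
Lemma ipxx_nrm2 x : ip x x = (nrm x)%:C ^+ 2.
Proof. by rewrite ipxx_nrm CX. Qed.
Lemma CSR a b : ab (ip a b) <= nrm a * nrm b.
Proof. by have := CS a b; rewrite abE !hnormE -rmorphM lecR. Qed.
Lemma abD z w : ab (z + w) <= ab z + ab w.
Proof. by have := ler_normD z w; rewrite !abE -rmorphD lecR. Qed.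
Lemma abM z w : ab (z * w) = ab z * ab w.
Proof. by apply: complexI; rewrite rmorphM -!abE normrM. Qed.
Lemma abJ z : ab (z^*) = ab z.
Proof. by apply: complexI; rewrite -!abE norm_conjC. Qed.
Lemma abN z : ab (- z) = ab z.
Proof. by apply: complexI; rewrite -!abE normrN. Qed.
Lemma abB z w : ab (z - w) = ab (w - z).
Proof. by apply: complexI; rewrite -!abE distrC. Qed.
Lemma ab_eq0 z : ab z = 0 -> z = 0.
Proof. by move=> h; apply/normr0_eq0; rewrite abE h. Qed.
Lemma ab0 : ab 0 = 0.
Proof. by apply: complexI; rewrite -abE normr0. Qed.
Lemma abR (x : R) : ab (x%:C) = `|x|.
Proof. by rewrite /ab normc_def /= expr0n /= addr0 sqrtr_sqr. Qed.

Lemma nrm_eq0 x : nrm x = 0 -> x = 0.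
Proof. by move=> h; apply: ipxx_eq0; rewrite ipxx_nrm h expr0n. Qed.
Lemma nrmN x : nrm (- x) = nrm x.
Proof. by rewrite /nrm /hnorm ipNl ipNr opprK. Qed.
Lemma nrmB x y : nrm (x - y) = nrm (y - x).
Proof. by rewrite -nrmN opprB. Qed.
Lemma nrm0 : nrm 0 = 0.
Proof. by rewrite /nrm /hnorm ipx0 sqrtC0. Qed.
Lemma nrm_sq x : nrm x ^+ 2 = complex.Re (ip x x).
Proof. by rewrite ipxx_nrm. Qed.

Lemma Re_le_ab z : complex.Re z <= ab z.
Proof.
case: z => a b; rewrite /ab normc_def /=.
apply: le_trans (ler_norm a) _; rewrite -sqrtr_sqr ler_sqrt ?addr_ge0 ?sqr_ge0 //.
by rewrite lerDl sqr_ge0.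
Qed.

Lemma ReJ (z : R[i]) : complex.Re (z^*) = complex.Re z.
Proof. by case: z. Qed.

Lemma nrm_sqD x y : nrm (x + y) ^+ 2 =
  nrm x ^+ 2 + nrm y ^+ 2 + 2 * complex.Re (ip x y).
Proof.
rewrite !nrm_sq ipDl !ipDr (ipC y x) !raddfD /= ReJ.
by rewrite mulr2n mulrDl mul1r; ring.
Qed.

Lemma nrmD x y : nrm (x + y) <= nrm x + nrm y.
Proof.
have h1 := nrm_sqD x y.
have h2 := Re_le_ab (ip x y); have h3 := CSR x y.
have h4 := nrm_ge0 (x + y); have h5 := nrm_ge0 x; have h6 := nrm_ge0 y.
have h7 : nrm (x + y) ^+ 2 <= (nrm x + nrm y) ^+ 2 by rewrite h1; nra.
by rewrite -(ler_pXn2r (isT : (0 < 2)%N)) ?nnegrE ?addr_ge0.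
Qed.

Lemma nrm_sq_close a b : nrm (a + b) ^+ 2 <= nrm a ^+ 2 + (2 * nrm a + nrm b) * nrm b.
Proof.
have := nrmD a b; have := nrm_ge0 (a + b); have := nrm_ge0 a; have := nrm_ge0 b.
move=> h1 h2 h3 h4; nra.
Qed.

Lemma nrmZ (c : R[i]) x : nrm (c *: x) = ab c * nrm x.
Proof.
have h : nrm (c *: x) ^+ 2 = (ab c * nrm x) ^+ 2.
  apply: complexI; rewrite -ipxx_nrm ipZl ipZr mulrA exprMn CM ipxx_nrm.
  by rewrite [(ab c ^+ 2)%:C]CX -abE normCKC.
move/eqP: h; rewrite eqrXn2 // ?mulr_ge0 ?ab_ge0 ?nrm_ge0 //; exact/eqP.
Qed.

Lemma natinv (d : R) : 0 < d -> exists N, forall n, (N <= n)%N -> (n.+1%:R)^-1 < d.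
Proof.
move=> d0; exists (Num.Def.trunc d^-1) => n hn.
rewrite invf_plt ?posrE ?ltr0Sn //.
apply: lt_le_trans (truncnS_gt _) _; rewrite ler_nat; exact: hn.
Qed.

Lemma complR (u : nat -> H) :
  (forall e : R, 0 < e -> exists N, forall m n, (N <= m)%N -> (N <= n)%N -> nrm (u m - u n) < e) ->
  exists l, forall e : R, 0 < e -> exists N, forall n, (N <= n)%N -> nrm (u n - l) < e.
Proof.
move=> h; case: hH => _ _ _ _ hc.
case: (hc u) => [eps /Cre_gt0 [-> ep]|l hl].
  have [N hN] := h _ ep.
  by exists N => m n hm hn; rewrite hnormE ltcR; exact: hN.
exists l => e e0; have [|N hN] := hl (e%:C); first by rewrite -C0 ltcR.
by exists N => n hn; have := hN n hn; rewrite hnormE ltcR.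
Qed.

Lemma small_choose (K eps : R) : 0 <= K -> 0 < eps ->
  exists d, [/\ 0 < d, d <= 1 & K * d <= eps].
Proof.
move=> K0 e0; have K1 : 0 < K + 1 by lra.
exists (Num.min 1 (eps / (K + 1))); split.
- by rewrite lt_min ltr01 divr_gt0.
- by rewrite ge_min lexx.
- apply: le_trans (_ : (K + 1) * (eps / (K + 1)) <= eps).
    apply: le_trans (_ : (K + 1) * Num.min 1 (eps / (K + 1)) <= _).
      apply: ler_wpM2r; last lra.
      by rewrite le_min ler01 /= ltW // divr_gt0.
    by apply: ler_wpM2l; [lra|by rewrite ge_min lexx orbT].
  by rewrite mulrC divfK // gt_eqF.
Qed.

Lemma par2 phi u v : nrm (u - v) ^+ 2 + 4 * nrm (phi - 2^-1 *: (u + v)) ^+ 2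
  = 2 * nrm (phi - u) ^+ 2 + 2 * nrm (phi - v) ^+ 2.
Proof.
apply: complexI; rewrite !CD (CM 4) (CM 2) (CM 2) !Cn -!ipxx_nrm.
have c2 : (2^-1 : R[i])^* = 2^-1.
  by rewrite -[2 : R[i]]Cn -CV Cconj.
rewrite !ipBl !ipBr !ipZl !ipZr !ipDl !ipDr c2.
by field.
Qed.

Section Proj.
Variable S : set H.
Hypothesis S0 : S 0.
Hypothesis SL : forall a u w, S u -> S w -> S (a *: u + w).

Lemma proj phi : exists m, (forall e : R, 0 < e -> exists w, S w /\ nrm (m - w) < e)
  /\ (forall w, S w -> ip w (phi - m) = 0).
Proof.
pose E := [set r : R | exists w, S w /\ r = nrm (phi - w) ^+ 2].
have E0 : E (nrm (phi - 0) ^+ 2) by exists 0.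
have hlb : has_lbound E by exists 0 => r [w [_ ->]]; exact: sqr_ge0.
have hinf : has_inf E by split => //; exists (nrm (phi - 0) ^+ 2).
pose d := inf E.
have dlb : forall w, S w -> d <= nrm (phi - w) ^+ 2.
  by move=> w Sw; apply: (ge_inf hlb); exists w.
have d0 : 0 <= d.
  by apply: lb_le_inf; [exists (nrm (phi - 0) ^+ 2)|move=> r [w [_ ->]]; exact: sqr_ge0].
have : forall n : nat, exists w, S w /\ nrm (phi - w) ^+ 2 < d + n.+1%:R^-1.
  move=> n; have [|r [w [Sw ->]] hr] := inf_adherent (eps := n.+1%:R^-1) _ hinf.
    by rewrite invr_gt0 ltr0Sn.
  by exists w.
move=> /choice [f hf].
clearbody d.
have cau : forall n k, nrm (f n - f k) ^+ 2 <= 2 * n.+1%:R^-1 + 2 * k.+1%:R^-1.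
  move=> n k; have := par2 phi (f n) (f k).
  have Smid : S (2^-1 *: (f n + f k)).
    by rewrite scalerDr; apply: SL; [case: (hf n)|rewrite -[_ *: f k]addr0; apply: SL => //; case: (hf k)].
  have := dlb _ Smid; have [_ hn] := hf n; have [_ hk] := hf k.
  move: (n.+1%:R^-1) (k.+1%:R^-1) hn hk => i j hn hk h1 h2; lra.
case: (complR f) => [e e0|m hm].
  have [|N hN] := natinv (e ^+ 2 / 4).
    by rewrite divr_gt0 ?exprn_gt0.
  exists N => n k hn hk; have := cau n k; have := hN n hn; have := hN k hk.
  move=> h1 h2 h3.
  have h4 : nrm (f n - f k) ^+ 2 < e ^+ 2.
    by move: (n.+1%:R^-1) (k.+1%:R^-1) h1 h2 h3 => i j h1 h2 h3; lra.
  by rewrite -(ltr_pXn2r (_ : (0 < 2)%N)) ?nnegrE ?nrm_ge0 ?ltW.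
exists m; split.
  move=> e e0; have [N hN] := hm e e0; exists (f N); split; first by case: (hf N).
  by rewrite nrmB; exact: hN.
set r := phi - m.
have c1 : nrm r ^+ 2 <= d.
  apply/ler_addgt0Pr => eps eps0.
  have hK : 0 <= 2 * (d + 2) + 1 by lra.
  have he : 0 < eps / 2 by lra.
  have [dl [dl0 dl1 dlK]] := small_choose _ _ hK he.
  have [N1 hN1] := hm dl dl0.
  have [N2 hN2] := natinv _ he.
  pose n := maxn N1 N2.
  have hn1 := hN1 n (leq_maxl _ _); have hn2 := hN2 n (leq_maxr _ _).
  have h := nrm_sq_close (phi - f n) (f n - m).
  have er : (phi - f n) + (f n - m) = r by rewrite addrA subrK.
  rewrite er in h.
  have [_ ha] := hf n.
  have a0 := nrm_ge0 (phi - f n); have b0 := nrm_ge0 (f n - m).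
  have ninv : n.+1%:R^-1 <= (1 : R) by rewrite invf_le1 ?ler1n ?ltr0Sn.
  move: (n.+1%:R^-1) ha ninv hn2 => i ha ninv hn2.
  have aB : nrm (phi - f n) <= d + 2.
    have := sqr_ge0 (nrm (phi - f n) - 1); nra.
  have hb : (2 * nrm (phi - f n) + nrm (f n - m)) * nrm (f n - m) <= (2 * (d + 2) + 1) * dl.
    apply: le_trans (_ : (2 * (d + 2) + 1) * nrm (f n - m) <= _).
      by apply: ler_wpM2r => //; lra.
    by apply: ler_wpM2l; lra.
  lra.
have c2 : forall w t, S w -> d <= nrm (r - t *: w) ^+ 2.
  move=> w t Sw; apply/ler_addgt0Pr => eps eps0.
  set a := nrm (r - t *: w).
  have a0 : 0 <= a by exact: nrm_ge0.
  have hK : 0 <= 2 * a + 1 by lra.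
  have [dl [dl0 dl1 dlK]] := small_choose _ _ hK eps0.
  have [N hN] := hm dl dl0.
  have hb := hN N (leqnn N).
  have S2 : S (t *: w + f N) by apply: SL => //; case: (hf N).
  have h1 := dlb _ S2.
  have er : phi - (t *: w + f N) = (r - t *: w) + (m - f N).
    rewrite /r opprD !addrA; congr (_ - _).
    by rewrite [in RHS]addrAC subrK.
  rewrite er in h1.
  have h := nrm_sq_close (r - t *: w) (m - f N).
  rewrite -/a nrmB in h.
  have b0 := nrm_ge0 (f N - m).
  have hb2 : (2 * a + nrm (f N - m)) * nrm (f N - m) <= (2 * a + 1) * dl.
    apply: le_trans (_ : (2 * a + 1) * nrm (f N - m) <= _).
      by apply: ler_wpM2r => //; lra.
    by apply: ler_wpM2l; lra.
  lra.
clearbody r.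
move=> w Sw.
set z := ip w r.
pose s : R := (nrm w ^+ 2 + 1)^-1.
have s0 : 0 < s by rewrite invr_gt0; have := sqr_ge0 (nrm w); lra.
have sW : s * nrm w ^+ 2 <= 1.
  rewrite /s mulrC -ler_pdivlMr ?div1r ?invrK; [lra|].
  by rewrite invr_gt0; have := sqr_ge0 (nrm w); lra.
have iden : nrm (r - ((s%:C) * z) *: w) ^+ 2
    = nrm r ^+ 2 - 2 * s * ab z ^+ 2 + s ^+ 2 * ab z ^+ 2 * nrm w ^+ 2.
  apply: complexI.
  rewrite !CD !CN (CM (2 * s)) (CM 2) (CM (s ^+ 2 * ab z ^+ 2)) (CM (s ^+ 2)) !CX Cn -!ipxx_nrm2 -abE normCK.
  have cj : (s%:C * z)^* = s%:C * z^* by rewrite rmorphM; congr (_ * _); exact: Cconj.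
  rewrite !ipBl !ipBr !ipZl !ipZr (ipC w r) -/z cj.
  ring.
have := c2 w ((s%:C) * z) Sw; rewrite iden => h.
have A0 : 0 <= s * ab z ^+ 2 by apply: mulr_ge0; [exact: ltW|exact: sqr_ge0].
have : ab z ^+ 2 <= 0 by nra.
move=> hA; apply: ab_eq0; have := ab_ge0 z; nra.
Qed.

End Proj.

Lemma lin0 (S : H -> H) : is_linear_op S -> S 0 = 0.
Proof.
move=> hS; have := hS 1 0 0; rewrite scaler0 addr0 scale1r => h.
by apply: (addrI (S 0)); rewrite addr0 -h.
Qed.
Lemma linD (S : H -> H) u v : is_linear_op S -> S (u + v) = S u + S v.
Proof. by move=> hS; have := hS 1 u v; rewrite !scale1r. Qed.
Lemma linZ (S : H -> H) a u : is_linear_op S -> S (a *: u) = a *: S u.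
Proof. by move=> hS; have := hS a u 0; rewrite !addr0 (lin0 _ hS) addr0. Qed.
Lemma linN (S : H -> H) u : is_linear_op S -> S (- u) = - S u.
Proof. by move=> hS; rewrite -scaleN1r linZ // scaleN1r. Qed.
Lemma linB (S : H -> H) u v : is_linear_op S -> S (u - v) = S u - S v.
Proof. by move=> hS; rewrite linD // linN. Qed.

Lemma bnd (T : H -> H) : is_bounded_op ip T ->
  exists K : R, 0 <= K /\ forall u, nrm (T u) <= K * nrm u.
Proof.
case=> _ [M hM]; exists (ab M); split; first exact: ab_ge0.
move=> u; have h := hM u.
have hr : M * hnorm ip u \is Num.real.
  have -> : M * hnorm ip u = hnorm ip (T u) + (M * hnorm ip u - hnorm ip (T u)).
    by rewrite addrC subrK.
  by rewrite rpredD // ger0_real // ?hnorm_ge0 ?subr_ge0.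
have := le_trans h (real_ler_norm hr).
by rewrite normrM (ger0_norm (hnorm_ge0 u)) abE !hnormE -CM lecR.
Qed.

Lemma ab_le_eps (z : R[i]) : (forall eps : R, 0 < eps -> ab z <= eps) -> z = 0.
Proof.
move=> h; apply: ab_eq0; apply/eqP; rewrite eq_le ab_ge0 andbT.
apply/ler_addgt0Pr => eps e0; rewrite add0r; exact: h.
Qed.

Lemma dens_eq (P : H -> Prop) (f g : H -> R[i]) (K : R) : 0 <= K ->
  (forall y (eps : R), 0 < eps -> exists z, P z /\ nrm (y - z) < eps) ->
  (forall u w, ab (f u - f w) <= K * nrm (u - w)) ->
  (forall u w, ab (g u - g w) <= K * nrm (u - w)) ->
  (forall z, P z -> f z = g z) -> forall y, f y = g y.
Proof.
move=> K0 dP hf hg hfg y; apply/eqP; rewrite -subr_eq0; apply/eqP.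
apply: ab_le_eps => eps e0.
have K2 : 0 <= 2 * K by lra.
have [dl [dl0 _ hdl]] := small_choose _ _ K2 e0.
have [z [Pz hz]] := dP y dl dl0.
have -> : f y - g y = (f y - f z) + (g z - g y) by rewrite (hfg z Pz) addrA subrK.
apply: le_trans (abD _ _) _.
have h1 := hf y z; have h2 := hg z y; rewrite nrmB in h2.
have h3 : K * nrm (y - z) <= K * dl by apply: ler_wpM2l => //; exact: ltW.
lra.
Qed.

Definition Pr (o : seq H) (w : H) : H := \sum_(u <- o) ((ip u w) / (ip u u)) *: u.

Fixpoint orth (o : seq H) : Prop :=
  match o with [::] => True | u :: o' => (forall w, w \in o' -> ip u w = 0) /\ orth o' end.

Lemma Pr_nil w : Pr [::] w = 0.
Proof. by rewrite /Pr big_nil. Qed.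
Lemma Pr_cons u o w : Pr (u :: o) w = ((ip u w) / (ip u u)) *: u + Pr o w.
Proof. by rewrite /Pr big_cons. Qed.

Lemma PrL o a y z : Pr o (a *: y + z) = a *: Pr o y + Pr o z.
Proof.
elim: o => [|u o IH]; first by rewrite !Pr_nil scaler0 addr0.
rewrite !Pr_cons IH ipL mulrDl scalerDl scalerDr -mulrA -scalerA addrACA.
by [].
Qed.

Lemma PrA o z t : (forall u, u \in o -> ip z u = 0) -> ip z (Pr o t) = 0.
Proof.
elim: o => [|u o IH] h; first by rewrite Pr_nil ipx0.
rewrite Pr_cons ipDr ipZr h ?mem_head // mulr0 add0r IH //.
by move=> w wo; apply: h; rewrite in_cons wo orbT.
Qed.

Lemma PrC o z : (forall u, u \in o -> ip u z = 0) -> Pr o z = 0.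
Proof.
elim: o => [|u o IH] h; first by rewrite Pr_nil.
rewrite Pr_cons h ?mem_head // mul0r scale0r add0r IH //.
by move=> w wo; apply: h; rewrite in_cons wo orbT.
Qed.

Lemma PrB o t : orth o -> forall w, w \in o -> ip w (Pr o t) = ip w t.
Proof.
elim: o => [|u o IH] //= [hu ho] w; rewrite in_cons => /orP [/eqP -> | wo].
  rewrite Pr_cons ipDr ipZr (@PrA _ u) // addr0.
  have [u0|uu0] := eqVneq (ip u u) 0.
    by rewrite (ipxx_eq0 _ u0) !ip0x !mul0r.
  by rewrite divfK.
by rewrite Pr_cons ipDr ipZr IH // (ipC u w) (hu w wo) conjC0 mulr0 add0r.
Qed.

Lemma span_nil (w : H) : span_of [::] w -> w = 0.
Proof. by case=> c ->; rewrite big_ord0. Qed.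

Lemma span0 (s : seq H) : span_of s 0.
Proof. by exists (fun _ => 0); rewrite big1 // => i _; rewrite scale0r. Qed.

Lemma spanL (s : seq H) a u v : span_of s u -> span_of s v -> span_of s (a *: u + v).
Proof.
case=> c1 -> [c2 ->]; exists (fun i => a * c1 i + c2 i).
rewrite scaler_sumr -big_split /=; apply: eq_bigr => i _.
by rewrite scalerDl scalerA.
Qed.

Lemma span_cons (t : H) s w :
  span_of (t :: s) w <-> exists a w', span_of s w' /\ w = a *: t + w'.
Proof.
split.
  case=> c ->; exists (c ord0); exists (\sum_(i < size s) c (lift ord0 i) *: nth 0 s i).
  split; first by exists (fun i => c (lift ord0 i)).
  by rewrite big_ord_recl.
case=> a [w' [[c ->] ->]].
exists (fun i : 'I_(size s).+1 => if unlift ord0 i is Some k then c k else a).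
rewrite big_ord_recl unlift_none /=; congr (_ + _).
by apply: eq_bigr => i _; rewrite liftK.
Qed.

Lemma span_sum (s : seq H) o : (forall u, u \in o -> span_of s u) -> forall t, span_of s (Pr o t).
Proof.
elim: o => [|u o IH] h t; first by rewrite Pr_nil; exact: span0.
rewrite Pr_cons; apply: spanL; first by apply: h; rewrite mem_head.
by apply: IH => w wo; apply: h; rewrite in_cons wo orbT.
Qed.

Lemma GS (s : seq H) : exists o, [/\ (forall u, u \in o -> span_of s u), orth o &
  (forall w, span_of s w -> Pr o w = w)].
Proof.
elim: s => [|t s [o [oin oorth orec]]].
  exists [::]; split => //; by move=> w /span_nil ->; rewrite Pr_nil.
set r := t - Pr o t.
have rperp : forall u, u \in o -> ip u r = 0.
  by move=> u uo; rewrite /r ipBr PrB // subrr.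
exists (r :: o); split.
- move=> u; rewrite in_cons => /orP [/eqP -> | uo].
    apply/span_cons; exists 1; exists (- Pr o t); split.
      rewrite -scaleN1r -[_ *: Pr o t]addr0; apply: spanL; [exact: span_sum|exact: span0].
    by rewrite scale1r.
  apply/span_cons; exists 0; exists u; split; first exact: oin.
  by rewrite scale0r add0r.
- split => //; move=> w wo; rewrite (ipC w r) rperp // conjC0 //.
- move=> w /span_cons [a [w' [sw' ->]]].
  set u := a *: Pr o t + w'.
  have su : span_of s u by apply: spanL => //; exact: span_sum.
  have ew : a *: t + w' = a *: r + u by rewrite /u /r scalerBr addrA subrK.
  rewrite ew Pr_cons PrL (orec _ su) (@PrC _ r) // scaler0 add0r.
  have ru : ip r u = 0.
    rewrite -(orec _ su) (@PrA _ r) // => u' u'o.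
    by rewrite (ipC u' r) rperp // conjC0.
  rewrite ipL ru addr0.
  have [r0|rr0] := eqVneq (ip r r) 0.
    by rewrite (ipxx_eq0 _ r0) !scaler0.
  by rewrite mulfK.
Qed.

Section Main.
Variables (X : topologicalType) (mul : X -> X -> X) (inv : X -> X) (e : X).
Hypothesis hX : is_topological_group mul inv e.
Variable U : X -> H -> H.
Hypothesis hU : is_unitary_rep mul e ip U.

Lemma Ulin y : is_linear_op (U y).
Proof. by case: hU => /(_ y) [hl _ _]. Qed.
Lemma Uip y u v : ip (U y u) (U y v) = ip u v.
Proof. by case: hU => /(_ y) [_ h _]. Qed.
Lemma UinvK y v : U (inv y) (U y v) = v.
Proof.
case: hX => _ _ /(_ y) [hinv _] _ _; case: hU => _ he hm _.
have := hm (inv y) y; rewrite hinv he => h.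
by have := congr1 (fun f => f v) h => /= <-.
Qed.
Lemma UKinv y v : U y (U (inv y) v) = v.
Proof.
case: hX => _ _ /(_ y) [_ hinv] _ _; case: hU => _ he hm _.
have := hm y (inv y); rewrite hinv he => h.
by have := congr1 (fun f => f v) h => /= <-.
Qed.
Lemma nrmU y v : nrm (U y v) = nrm v.
Proof. by rewrite /nrm /hnorm Uip. Qed.
Lemma UB y u v : U y (u - v) = U y u - U y v.
Proof. exact/linB/Ulin. Qed.

Variables (l : X -> R) (J : Type) (le : J -> J -> Prop).
Hypothesis hJ : is_directed le.
Variable x : J -> X.
Hypothesis hdiv : forall M : R, exists j0, forall j, le j0 j -> M < l (x j).
Variables (domA : set H) (A : H -> H).
Hypothesis hA : is_selfadjoint ip domA A.
Variable Cm : J -> H -> H.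
Hypothesis hCm : forall j, is_commutator ip domA A (U (x j)) (Cm j).
Variable D : H -> H.
Hypothesis hD : net_slim le ip
  (fun j psi => (real_complex R (l (x j))^-1) *: Cm j (U (inv (x j)) psi)) D.

Definition ev (P : J -> Prop) := exists j0, forall j, le j0 j -> P j.
Lemma ev_and P Q : ev P -> ev Q -> ev (fun j => P j /\ Q j).
Proof.
case: hJ => _ _ htr hup [j1 h1] [j2 h2]; have [k [k1 k2]] := hup j1 j2.
by exists k => j kj; split; [apply: h1; apply: htr kj|apply: h2; apply: htr kj].
Qed.
Lemma ev_some P : ev P -> exists j, P j.
Proof. by case: hJ => _ hr _ _ [j0 h]; exists j0; apply: h. Qed.
Arguments ev_and {P Q}.
Arguments ev_some {P}.

Lemma Cm_lin j : is_linear_op (Cm j).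
Proof. by case: (hCm j) => [[]]. Qed.
Lemma Cm_form j phi psi : domA phi -> domA psi ->
  ip phi (Cm j psi) = ip (A phi) (U (x j) psi) - ip phi (U (x j) (A psi)).
Proof. by case: (hCm j) => _ h; apply: h. Qed.
Lemma A_sym psi phi : domA psi -> domA phi -> ip psi (A phi) = ip (A psi) phi.
Proof. by case: hA => _ _ _ _ h; apply: h. Qed.
Lemma A_dom psi : domA psi <-> exists eta, forall phi, domA phi -> ip psi (A phi) = ip eta phi.
Proof. by case: hA => _ _ _ h _; apply: h. Qed.
Lemma A_dense y (eps : R) : 0 < eps -> exists z, domA z /\ nrm (y - z) < eps.
Proof.
move=> e0; case: hA => _ _ h _ _.
have [|z [dz hz]] := h y (eps%:C); first by rewrite -C0 ltcR.
by exists z; split => //; move: hz; rewrite hnormE ltcR.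
Qed.

Lemma Inv j eta : domA eta -> domA (U (x j) eta).
Proof.
move=> deta; apply/A_dom; exists (Cm j eta + U (x j) (A eta)) => phi dphi.
have h := Cm_form j _ _ dphi deta.
have e1 : ip (A phi) (U (x j) eta) = ip phi (Cm j eta) + ip phi (U (x j) (A eta)).
  by rewrite h subrK.
by rewrite (ipC (A phi) (U (x j) eta)) e1 (ipC phi (Cm j eta + U (x j) (A eta))) ipDr.
Qed.

Lemma Sym0 j a b : domA a -> domA b -> ip (U (x j) a) (Cm j b) = ip (Cm j a) (U (x j) b).
Proof.
move=> da db.
rewrite (Cm_form j _ _ (Inv j _ da) db) Uip.
have e2 : ip (Cm j a) (U (x j) b) = ip (U (x j) a) (A (U (x j) b)) - ip (A a) b.
  rewrite (ipC (U (x j) b) (Cm j a)) (Cm_form j _ _ (Inv j _ db) da) Uip.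
  rewrite (ipC (A (U (x j) b)) (U (x j) a)) (ipC b (A a)).
  by rewrite rmorphB.
by rewrite e2 (A_sym _ _ (Inv j _ da) (Inv j _ db)) (A_sym _ _ da db).
Qed.

Lemma Cm_bnd j : exists K : R, 0 <= K /\ forall u, nrm (Cm j u) <= K * nrm u.
Proof. by apply: bnd; case: (hCm j). Qed.

Lemma UdomA_dense j y (eps : R) : 0 < eps ->
  exists z, (exists w, domA w /\ z = U (x j) w) /\ nrm (y - z) < eps.
Proof.
move=> e0; have [w [dw hw]] := A_dense (U (inv (x j)) y) _ e0.
exists (U (x j) w); split; first by exists w.
by rewrite -{1}(UKinv (x j) y) -UB nrmU.
Qed.

Lemma Sym j a b : ip a (Cm j (U (inv (x j)) b)) = ip (Cm j (U (inv (x j)) a)) b.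
Proof.
have [K [K0 hK]] := Cm_bnd j.
have hlin := Cm_lin j.
have step2 : forall a', domA a' -> forall b,
    ip (U (x j) a') (Cm j (U (inv (x j)) b)) = ip (Cm j (U (inv (x j)) (U (x j) a'))) b.
  move=> a' da'.
  set c := Cm j (U (inv (x j)) (U (x j) a')).
  apply: (@dens_eq (fun z => exists w, domA w /\ z = U (x j) w)
     (fun b => ip (U (x j) a') (Cm j (U (inv (x j)) b))) (fun b => ip c b)
     (nrm (U (x j) a') * K + nrm c)).
  - by rewrite addr_ge0 ?mulr_ge0 ?nrm_ge0.
  - exact: UdomA_dense.
  - move=> u w; rewrite -ipBr -(linB _ _ _ hlin) -UB.
    apply: le_trans (CSR _ _) _.
    have := hK (U (inv (x j)) (u - w)); rewrite nrmU => h1.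
    have := nrm_ge0 (U (x j) a'); have := nrm_ge0 c; have := nrm_ge0 (u - w).
    have := nrm_ge0 (Cm j (U (inv (x j)) (u - w))).
    nra.
  - move=> u w; rewrite -ipBr; apply: le_trans (CSR _ _) _.
    have := mulr_ge0 (mulr_ge0 (nrm_ge0 (U (x j) a')) K0) (nrm_ge0 (u - w)).
    have := nrm_ge0 (U (x j) a'); have := nrm_ge0 c; have := nrm_ge0 (u - w); nra.
  - by move=> z [w [dw ->]]; rewrite /c !UinvK Sym0.
apply: (@dens_eq (fun z => exists w, domA w /\ z = U (x j) w)
   (fun a => ip a (Cm j (U (inv (x j)) b))) (fun a => ip (Cm j (U (inv (x j)) a)) b)
   (nrm (Cm j (U (inv (x j)) b)) + K * nrm b)).
- by rewrite addr_ge0 ?mulr_ge0 ?nrm_ge0.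
- exact: UdomA_dense.
- move=> u w; rewrite -ipBl; apply: le_trans (CSR _ _) _.
  have := mulr_ge0 (mulr_ge0 K0 (nrm_ge0 b)) (nrm_ge0 (u - w)).
  have := nrm_ge0 (Cm j (U (inv (x j)) b)); have := nrm_ge0 b; have := nrm_ge0 (u - w); nra.
- move=> u w; rewrite -ipBl -(linB _ _ _ hlin) -UB.
  apply: le_trans (CSR _ _) _.
  have := hK (U (inv (x j)) (u - w)); rewrite nrmU => h1.
  have := nrm_ge0 (Cm j (U (inv (x j)) b)); have := nrm_ge0 b; have := nrm_ge0 (u - w).
  have := nrm_ge0 (Cm j (U (inv (x j)) (u - w))).
  nra.
- by move=> z [w [dw ->]]; apply: step2.
Qed.

Definition T j b := ((l (x j))^-1)%:C *: Cm j (U (inv (x j)) b).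

Lemma Tsym j a b : ip a (T j b) = ip (T j a) b.
Proof. by rewrite /T ipZr ipZl Cconj Sym. Qed.

Lemma hDR psi (eps : R) : 0 < eps -> ev (fun j => nrm (T j psi - D psi) < eps).
Proof.
move=> e0; have [|j0 h] := hD psi (eps%:C); first by rewrite -C0 ltcR.
by exists j0 => j hj; have := h j hj; rewrite hnormE ltcR.
Qed.

Lemma DSym a b : ip a (D b) = ip (D a) b.
Proof.
apply/eqP; rewrite -subr_eq0; apply/eqP; apply: ab_le_eps => eps e0.
have K0 : 0 <= nrm a + nrm b by rewrite addr_ge0 ?nrm_ge0.
have [dl [dl0 _ hdl]] := small_choose _ _ K0 e0.
have [j [h1 h2]] := ev_some (ev_and (hDR b _ dl0) (hDR a _ dl0)).
have -> : ip a (D b) - ip (D a) b = - ip a (T j b - D b) + ip (T j a - D a) b.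
  by rewrite ipBr ipBl Tsym; ring.
apply: le_trans (abD _ _) _; rewrite abN.
have c1 := CSR a (T j b - D b); have c2 := CSR (T j a - D a) b.
have := nrm_ge0 a; have := nrm_ge0 b; have := nrm_ge0 (T j b - D b).
have := nrm_ge0 (T j a - D a).
nra.
Qed.

Definition good phi := forall psi (eps : R), 0 < eps ->
  ev (fun j => ab (ip phi (U (x j) psi)) < eps).

Lemma ev_true (P : J -> Prop) : (forall j, P j) -> ev P.
Proof. by case: hJ => [[j0 _] _ _ _] h; exists j0. Qed.

Lemma good0 : good 0.
Proof. by move=> psi eps e0; apply: ev_true => j; rewrite ip0x ab0. Qed.

Lemma goodL a u w : good u -> good w -> good (a *: u + w).
Proof.
move=> gu gw psi eps e0.
have K0 : 0 <= ab a + 1 by have := ab_ge0 a; lra.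
have [dl [dl0 _ hdl]] := small_choose _ _ K0 e0.
have [j0 h] := ev_and (gu psi dl dl0) (gw psi dl dl0).
exists j0 => j /h [h1 h2].
rewrite ipDl ipZl; apply: le_lt_trans (abD _ _) _; rewrite abM abJ.
have := ab_ge0 a; have := ab_ge0 (ip u (U (x j) psi)); nra.
Qed.

Lemma goodC phi : (forall eps : R, 0 < eps -> exists w, good w /\ nrm (phi - w) < eps) ->
  good phi.
Proof.
move=> hc psi eps e0.
have K0 : 0 <= nrm psi + 1 by have := nrm_ge0 psi; lra.
have [dl [dl0 _ hdl]] := small_choose _ _ K0 e0.
have [w [gw hw]] := hc dl dl0.
have [j0 h] := gw psi dl dl0.
exists j0 => j /h h1.
have -> : ip phi (U (x j) psi) = ip (phi - w) (U (x j) psi) + ip w (U (x j) psi).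
  by rewrite ipBl subrK.
apply: le_lt_trans (abD _ _) _.
have := CSR (phi - w) (U (x j) psi); rewrite nrmU => h2.
have := nrm_ge0 psi; have := nrm_ge0 (phi - w); nra.
Qed.

Lemma Decay v : domA v -> good (D v).
Proof.
move=> dv psi eps e0.
have e3 : 0 < eps / 3 by lra.
have [d1 [d10 _ hd1]] := small_choose _ _ (nrm_ge0 (D v)) e3.
have [psi' [dpsi' hpsi']] := A_dense psi _ d10.
have [d2 [d20 _ hd2]] := small_choose _ _ (nrm_ge0 psi') e3.
set B := nrm (A v) * nrm psi' + nrm v * nrm (A psi').
have B0 : 0 <= B by rewrite /B addr_ge0 ?mulr_ge0 ?nrm_ge0.
have [j0 h] := ev_and (hDR v _ d20) (hdiv ((B + 1) * 3 / eps)).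
exists j0 => j /h [h1 h2].
have -> : ip (D v) (U (x j) psi) = ip (D v) (U (x j) (psi - psi'))
    + ip (D v - T j v) (U (x j) psi') + ip (T j v) (U (x j) psi').
  by rewrite UB ipBr ipBl; ring.
have lpos : 0 < l (x j).
  apply: le_lt_trans h2; rewrite mulr_ge0 // ?invr_ge0 ?ltW //; lra.
have e4 : ip (T j v) (U (x j) psi') = ((l (x j))^-1)%:C *
    (ip (A v) (U (x j) psi') - ip v (U (x j) (A psi'))).
  by rewrite -Tsym /T ipZr UinvK (Cm_form j _ _ dv dpsi').
rewrite e4.
apply: le_lt_trans (abD _ _) _; apply: le_lt_trans (lerD (abD _ _) (lexx _)) _.
have a1 := CSR (D v) (U (x j) (psi - psi')); rewrite nrmU in a1.
have a2 := CSR (D v - T j v) (U (x j) psi'); rewrite nrmU nrmB in a2.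
rewrite abM abR ger0_norm ?invr_ge0 ?ltW //.
have a3 : ab (ip (A v) (U (x j) psi') - ip v (U (x j) (A psi'))) <= B.
  apply: le_trans (abD _ _) _; rewrite abN.
  have := CSR (A v) (U (x j) psi'); have := CSR v (U (x j) (A psi')); rewrite !nrmU /B.
  lra.
have a4 : (l (x j))^-1 * B < eps / 3.
  have hM : (B + 1) * 3 / eps * (eps / 3) = B + 1 by field; lra.
  rewrite -(ltr_pM2l lpos) mulrA mulfV ?gt_eqF // mul1r.
  have : (B + 1) * 3 / eps * (eps / 3) < l (x j) * (eps / 3) by rewrite ltr_pM2r.
  lra.
have a5 : (l (x j))^-1 * ab (ip (A v) (U (x j) psi') - ip v (U (x j) (A psi'))) <= (l (x j))^-1 * B.
  by apply: ler_wpM2l => //; rewrite invr_ge0 ltW.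
have p1 : nrm (D v) * nrm (psi - psi') <= nrm (D v) * d1.
  by apply: ler_wpM2l; [exact: nrm_ge0|exact: ltW].
have p2 : nrm (T j v - D v) * nrm psi' <= d2 * nrm psi'.
  by apply: ler_wpM2r; [exact: nrm_ge0|exact: (ltW h1)].
lra.
Qed.

Lemma parta phi : ker_perp ip D phi -> good phi.
Proof.
move=> hk.
have [m [hm horth]] := @proj good good0 goodL phi.
set r := phi - m.
have hr : forall v, domA v -> ip v (D r) = 0.
  by move=> v dv; rewrite DSym; apply: horth; apply: Decay.
have Dr0 : D r = 0.
  apply: ipxx_eq0; apply: ab_le_eps => eps e0.
  have [dl [dl0 _ hdl]] := small_choose _ _ (nrm_ge0 (D r)) e0.
  have [v [dv hv]] := A_dense (D r) _ dl0.
  have -> : ip (D r) (D r) = ip (D r - v) (D r) by rewrite ipBl (hr v dv) subr0.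
  apply: le_trans (CSR _ _) _; have := nrm_ge0 (D r); have := nrm_ge0 (D r - v); nra.
have h1 : ip r phi = 0 by apply: hk.
have h2 : ip m r = 0.
  apply: ab_le_eps => eps e0.
  have [dl [dl0 _ hdl]] := small_choose _ _ (nrm_ge0 r) e0.
  have [w [gw hw]] := hm dl dl0.
  have -> : ip m r = ip (m - w) r by rewrite ipBl (horth w gw) subr0.
  apply: le_trans (CSR _ _) _; have := nrm_ge0 r; have := nrm_ge0 (m - w); nra.
have r0 : r = 0.
  apply: ipxx_eq0; rewrite {2}/r ipBr h1 (ipC m r) h2.
  by rewrite rmorph0 subr0.
apply: goodC => eps e0; have [w [gw hw]] := hm eps e0; exists w; split => //.
by move/eqP: r0; rewrite /r subr_eq0 => /eqP ->.
Qed.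

Lemma parta' phi psi : ker_perp ip D phi -> net_cvgC le (fun j => ip phi (U (x j) psi)) 0.
Proof.
move=> hk eps /Cre_gt0 [-> ep]; have [j0 h] := parta _ hk psi _ ep.
by exists j0 => j /h; rewrite subr0 abE ltcR.
Qed.

Lemma sum_small (v : H) (o : seq H) : (forall u, u \in o -> good u) ->
  forall eps : R, 0 < eps ->
  ev (fun j => ab (\sum_(u <- o) (ip u (U (x j) v) / ip u u * ip (U (x j) v) u)) < eps).
Proof.
elim: o => [|u o IH] hg eps e0.
  by apply: ev_true => j; rewrite big_nil ab0.
have e2 : 0 < eps / 2 by lra.
set c := ab ((ip u u)^-1) * (nrm v * nrm u).
have c0 : 0 <= c by rewrite /c !mulr_ge0 ?ab_ge0 ?nrm_ge0.
have K0 : 0 <= c + 1 by lra.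
have [dl [dl0 _ hdl]] := small_choose _ _ K0 e2.
have hg' : forall w, w \in o -> good w by move=> w wo; apply: hg; rewrite in_cons wo orbT.
have [j0 h] := ev_and (hg u (mem_head _ _) v _ dl0) (IH hg' _ e2).
exists j0 => j /h [h1 h2].
rewrite big_cons; apply: le_lt_trans (abD _ _) _.
rewrite !abM.
have := CSR (U (x j) v) u; rewrite nrmU => h3.
have p1 : ab (ip u (U (x j) v)) * ab (ip u u)^-1 * ab (ip (U (x j) v) u)
    <= ab (ip u (U (x j) v)) * ab (ip u u)^-1 * (nrm v * nrm u).
  by apply: ler_wpM2l => //; rewrite mulr_ge0 ?ab_ge0.
have p2 : ab (ip u (U (x j) v)) * ab (ip u u)^-1 * (nrm v * nrm u) <= dl * c.
  rewrite /c (mulrA dl); apply: ler_wpM2r; first by rewrite mulr_ge0 ?nrm_ge0.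
  by apply: ler_wpM2r; [exact: ab_ge0|exact: (ltW h1)].
lra.
Qed.

Lemma partb : ~ (exists s : seq H,
       (exists v, span_of s v /\ v <> 0) /\
       span_of s `<=` ker_perp ip D /\
       (forall (y : X) (v : H), span_of s v -> span_of s (U y v))).
Proof.
case=> s [[v [sv v0]] [sk sinv]]; apply: v0.
have [o [oin oorth orec]] := GS s.
have og : forall u, u \in o -> good u.
  by move=> u uo; apply: parta; apply: sk; apply: oin.
have key : forall j, ip v v = \sum_(u <- o) (ip u (U (x j) v) / ip u u * ip (U (x j) v) u).
  move=> j; rewrite -(Uip (x j) v v) -{2}(orec _ (sinv (x j) v sv)) /Pr ip_sumr.
  by apply: eq_bigr => u _; rewrite ipZr.
apply: ipxx_eq0; apply: ab_le_eps => eps e0.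
have [j hj] := ev_some (sum_small v o og _ e0).
by rewrite (key j); apply: ltW.
Qed.

End Main.

End Hil.

Lemma ldiv (R : realType) (X : topologicalType) (mul : X -> X -> X) (inv : X -> X) (e : X)
  (l : X -> R) (hl : is_proper_length mul inv e l)
  (J : Type) (le : J -> J -> Prop) (hJ : is_directed le)
  (x : J -> X) (hx : net_diverges le x) (M : R) :
  exists j0, forall j, le j0 j -> M < l (x j).
Proof.
apply: contrapT => hno.
have hfreq : forall j0, exists j, le j0 j /\ l (x j) <= M.
  move=> j0; apply: contrapT => h; apply: hno; exists j0 => j hj.
  rewrite ltNge; apply/negP => hle; apply: h; by exists j.
case: hl => l0 _ _ _ hK.
case: hJ => [[j00 _] _ htr hup].
pose B j := [set y | exists k, le j k /\ l (x k) <= M /\ y = x k].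
have FF : Filter (filter_from [set: J] B).
  apply: filter_fromT_filter; first by exists j00.
  move=> i j; have [k [ik jk]] := hup i j; exists k => y [k' [kk' [hk' ->]]].
  by split; exists k'; split => //; apply: htr kk'.
have PF : ProperFilter (filter_from [set: J] B).
  apply: filter_from_proper => i _; have [k [ik hk]] := hfreq i.
  by exists (x k); exists k.
have Kc : compact (closure (l @^-1` `[0, M])).
  apply: (hK _ (@segment_compact _ 0 M)).
  by move=> r; rewrite /= in_itv /= => /andP[].
have FK : filter_from [set: J] B (closure (l @^-1` `[0, M])).
  exists j00 => // y [k [_ [hk ->]]]; apply: subset_closure.
  by rewrite /= in_itv /= l0 hk.
have [p [_ cp]] := Kc _ PF FK.
apply: hx; exists p => N hN j.
have [y [[k [jk [_ ->]]] Ny]] := cp _ _ (@in_filter_from _ _ [set: J] B j I) hN.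
by exists k.
Qed.

Theorem theorem2p3
  (R : realType)
  (X : topologicalType) (mul : X -> X -> X) (inv : X -> X) (e : X)
  (hX : is_topological_group mul inv e)
  (l : X -> R) (hl : is_proper_length mul inv e l)
  (H : lmodType R[i]) (ip : H -> H -> R[i]) (hH : is_hilbert ip)
  (U : X -> H -> H) (hU : is_unitary_rep mul e ip U)
  (J : Type) (le : J -> J -> Prop) (hJ : is_directed le)
  (x : J -> X) (hx : net_diverges le x)
  (domA : set H) (A : H -> H) (hA : is_selfadjoint ip domA A)
  (hC1 : forall j, in_C1 ip domA A (U (x j)))
  (Cm : J -> H -> H) (hCm : forall j, is_commutator ip domA A (U (x j)) (Cm j))
  (D : H -> H)
  (hD : net_slim le ip
          (fun j psi => (real_complex R (l (x j))^-1) *: Cm j (U (inv (x j)) psi)) D) :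
  (forall phi psi, ker_perp ip D phi ->
      net_cvgC le (fun j => ip phi (U (x j) psi)) 0)
  /\
  ~ (exists s : seq H,
       (exists v, span_of s v /\ v <> 0) /\
       span_of s `<=` ker_perp ip D /\
       (forall (y : X) (v : H), span_of s v -> span_of s (U y v))).
Proof.
have hdiv := @ldiv R X mul inv e l hl J le hJ x hx.
split.
  move=> phi psi hk.
  exact: (@parta' R H ip hH X mul inv e hX U hU l J le hJ x hdiv domA A hA Cm hCm D hD phi psi hk).
exact: (@partb R H ip hH X mul inv e hX U hU l J le hJ x hdiv domA A hA Cm hCm D hD).
Qed.
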